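(* Consider the secure distributed linearly separable computation problem with $\mathsf K_{\rm c}=1$, $\mathsf M=\frac{\mathsf K}{\mathsf N}(\mathsf N-\mathsf N_{\rm r}+1)$, and suppose $\mathsf N-\mathsf N_{\rm r}+1$ divides $\mathsf N$. Then the minimum randomness size among secure schemes achieving the optimal communication cost is $$\eta^\star=\frac{\mathsf N}{\mathsf N-\mathsf N_{\rm r}+1}-1.$$
   Context: Problem setting. $\mathsf K,\mathsf N,\mathsf N_{\rm r},\mathsf M$ are positive integers with $\mathsf N_{\rm r}\le \mathsf N$ and $\mathsf N$ dividing $\mathsf K$. Fix a prime power $\mathsf q$ (sufficiently large) and a positive integer $\mathsf L$. Datasets $D_1,\dots,D_{\mathsf K}$ are independent; message $W_k=f_k(D_k)\in\mathbb F_{\mathsf q}^{\mathsf L}$, with $W_1,\dots,W_{\mathsf K}$ mutually independent and uniform over $\mathbb F_{\mathsf q}^{\mathsf L}$. The user wants $W_1+\cdots+W_{\mathsf K}$. A secure scheme consists of an assignment $\mathcal Z_n\subseteq[\mathsf K]$, $|\mathcal Z_n|\le\mathsf M$; a random variable $Q$ on a finite set independent of the datasets, given to all servers but not the user; transmissions $X_n=\psi_n(\{W_k:k\in\mathcal Z_n\},Q)\in\mathbb F_{\mathsf q}^{\mathsf T_n}$; decodability from $\{X_n:n\in\mathcal A\}$ for every $\mathcal A\subseteq[\mathsf N]$, $|\mathcal A|=\mathsf N_{\rm r}$; security $I(W_1,\dots,W_{\mathsf K};X_1,\dots,X_{\mathsf N}\mid W_1+\cdots+W_{\mathsf K})=0$.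 Communication cost $\mathsf R=\max_{|\mathcal A|=\mathsf N_{\rm r}}\sum_{n\in\mathcal A}\mathsf T_n/\mathsf L$; randomness size $\eta=H(Q)/\mathsf L$ ($\mathsf q$-ary units). The optimal communication cost $\mathsf R^\star$ is the minimum of $\mathsf R$ over secure schemes, and $\eta^\star$ is the minimum of $\eta$ over secure schemes with $\mathsf R=\mathsf R^\star$. *)

(* Defs.v *)
From HB Require Import structures.
From Stdlib Require Import Reals.
From mathcomp Require Import all_boot all_order all_algebra all_field.
From mathcomp Require Import Rstruct.
Set Implicit Arguments. Unset Strict Implicit. Unset Printing Implicit Defensive.
Import Order.TTheory GRing.Theory Num.Theory.
Local Open Scope ring_scope.

Section Info.
Variables (Omega : finType) (P : Omega -> R).

Definition prob (T : eqType) (X : Omega -> T) (x : T) : R :=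
  \sum_(w : Omega | X w == x) P w.

Definition entropy (b : R) (T : eqType) (X : Omega -> T) : R :=
  - \sum_(x <- undup [seq X w | w <- enum Omega])
      (if 0 < prob X x then prob X x * (ln (prob X x) / ln b) else 0).

Definition cond_mutual_info (b : R) (T1 T2 T3 : eqType)
  (X : Omega -> T1) (Y : Omega -> T2) (Z : Omega -> T3) : R :=
  entropy b (fun w => (X w, Z w)) + entropy b (fun w => (Y w, Z w))
  - entropy b (fun w => (X w, Y w, Z w)) - entropy b Z.
End Info.

Definition msgs (F : finFieldType) (K L : nat) := {ffun 'I_K -> 'rV[F]_L}.

(* probability space: (W, Q), W uniform on (F^L)^K, Q ~ pQ independent of W *)
Definition joint_prob (F : finFieldType) (K L : nat) (Qt : finType) (pQ : Qt -> R)
  (o : msgs F K L * Qt) : R := pQ o.2 / (#|F| ^ (K * L))%:R.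

Definition is_distribution (Qt : finType) (pQ : Qt -> R) : Prop :=
  (forall q, 0 <= pQ q) /\ \sum_(q : Qt) pQ q = 1.

Definition msg_sum (F : finFieldType) (K L : nat) (w : msgs F K L) : 'rV[F]_L :=
  \sum_(k < K) w k.

Definition transmissions (F : finFieldType) (K N L : nat) (Qt : finType)
  (T : 'I_N -> nat) (psi : forall n : 'I_N, msgs F K L -> Qt -> 'rV[F]_(T n))
  (o : msgs F K L * Qt) : {dffun forall n : 'I_N, 'rV[F]_(T n)} :=
  [ffun n => psi n o.1 o.2].

(* A secure scheme: assignment Z, randomness Q ~ pQ on the finite set Qt,
   transmission lengths T, encoding functions psi. *)
Definition secure_scheme (F : finFieldType) (K N Nr M L : nat) (Qt : finType)
  (pQ : Qt -> R) (Z : 'I_N -> {set 'I_K}) (T : 'I_N -> nat)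
  (psi : forall n : 'I_N, msgs F K L -> Qt -> 'rV[F]_(T n)) : Prop :=
  [/\ is_distribution pQ,
      (forall n, (#|Z n| <= M)%N),
      (forall n (w w' : msgs F K L) q,
          (forall k, k \in Z n -> w k = w' k) -> psi n w q = psi n w' q),
      (forall A : {set 'I_N}, #|A| = Nr ->
         exists dec : {dffun forall n : 'I_N, 'rV[F]_(T n)} -> 'rV[F]_L,
           (forall x y : {dffun forall n : 'I_N, 'rV[F]_(T n)},
               (forall n, n \in A -> x n = y n) -> dec x = dec y) /\
           (forall (w : msgs F K L) q, 0 < pQ q ->
               dec (transmissions psi (w, q)) = msg_sum w))
    &
      cond_mutual_info (joint_prob pQ) (#|F|%:R)
        (fun o : msgs F K L * Qt => o.1)
        (transmissions psi)
        (fun o => msg_sum o.1) = 0].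

Definition comm_cost (N Nr L : nat) (T : 'I_N -> nat) : R :=
  (\max_(A : {set 'I_N} | #|A| == Nr) \sum_(n in A) T n)%N%:R / L%:R.

Definition rand_size (F : finFieldType) (K L : nat) (Qt : finType) (pQ : Qt -> R) : R :=
  entropy (joint_prob (F := F) (K := K) (L := L) pQ) (#|F|%:R)
    (fun o : msgs F K L * Qt => o.2) / L%:R.

Definition comm_achievable (F : finFieldType) (K N Nr M L : nat) (r : R) : Prop :=
  exists (Qt : finType) (pQ : Qt -> R) (Z : 'I_N -> {set 'I_K}) (T : 'I_N -> nat)
         (psi : forall n : 'I_N, msgs F K L -> Qt -> 'rV[F]_(T n)),
    @secure_scheme F K N Nr M L Qt pQ Z T psi /\ @comm_cost N Nr L T = r.

Definition rand_achievable (F : finFieldType) (K N Nr M L : nat) (r e : R) : Prop :=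
  exists (Qt : finType) (pQ : Qt -> R) (Z : 'I_N -> {set 'I_K}) (T : 'I_N -> nat)
         (psi : forall n : 'I_N, msgs F K L -> Qt -> 'rV[F]_(T n)),
    [/\ @secure_scheme F K N Nr M L Qt pQ Z T psi, @comm_cost N Nr L T = r & @rand_size F K L Qt pQ = e].

Definition is_min (S : R -> Prop) (v : R) : Prop := S v /\ forall x, S x -> v <= x.

(* Main.v *)
Require Import Defs.
From HB Require Import structures.
From Stdlib Require Import Reals.
From mathcomp Require Import all_boot all_order all_algebra all_field.
From mathcomp Require Import Rstruct.
From mathcomp Require Import zify ring lra.
Set Implicit Arguments. Unset Strict Implicit. Unset Printing Implicit Defensive.
Import Order.TTheory GRing.Theory Num.Theory.
Local Open Scope ring_scope.

Lemma lnM (x y : R) : 0 < x -> 0 < y -> ln (x * y) = ln x + ln y.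
Proof. by move=> /RltP hx /RltP hy; rewrite ln_mult. Qed.
Lemma lnV (x : R) : 0 < x -> ln x^-1 = - ln x.
Proof. by move=> /RltP hx; rewrite -RinvE ln_Rinv. Qed.
Lemma lnX (x : R) n : 0 < x -> ln (x ^+ n) = n%:R * ln x.
Proof. by move=> /RltP hx; rewrite -RpowE ln_pow // INRE. Qed.
Lemma ln_ler (x y : R) : 0 < x -> x <= y -> ln x <= ln y.
Proof.
move=> hx; rewrite le_eqVlt => /orP[/eqP->//|hxy].
by apply/RleP; apply: Rlt_le; apply: ln_increasing; apply/RltP.
Qed.
Lemma ln_gt0 (x : R) : 1 < x -> 0 < ln x.
Proof.
move=> h; have := @ln_increasing 1 x; rewrite ln_1 => H; apply/RltP; apply: H.
  exact: Rlt_0_1.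
by apply/RltP.
Qed.

Section Gen.
Variables (Omega : finType) (P : Omega -> R).
Hypothesis P_ge0 : forall w, 0 <= P w.

Lemma prob_ge0 (T : eqType) (X : Omega -> T) x : 0 <= prob P X x.
Proof. by apply: sumr_ge0. Qed.

Lemma prob_self (T : eqType) (X : Omega -> T) w : P w <= prob P X (X w).
Proof.
rewrite /prob (bigD1 w) //= lerDl; apply: sumr_ge0 => *; exact: P_ge0.
Qed.

Lemma entropyE b (T : eqType) (X : Omega -> T) :
  entropy P b X = - \sum_w P w * (ln (prob P X (X w)) / ln b).
Proof.
rewrite /entropy; congr (- _).
set s := undup _.
have us : uniq s by apply: undup_uniq.
have ms : forall w, X w \in s by move=> w; rewrite mem_undup map_f // mem_enum.
transitivity (\sum_(x <- s) \sum_(w | X w == x) P w * (ln (prob P X (X w)) / ln b)).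
  apply: eq_bigr => x _.
  rewrite (eq_bigr (fun w => P w * (ln (prob P X x) / ln b))); last by move=> w /eqP->.
  rewrite -mulr_suml -/(prob P X x).
  case: ifP => // /negbT h.
  have: prob P X x == 0 by rewrite eq_le prob_ge0 andbT leNgt.
  by move/eqP->; rewrite mul0r.
rewrite (eq_bigr (fun x => \sum_w if X w == x then P w * (ln (prob P X (X w)) / ln b) else 0)); last by move=> x _; rewrite big_mkcond.
rewrite exchange_big /=; apply: eq_bigr => w _.
rewrite (bigD1_seq (X w)) //= eqxx big1 ?addr0 // => x hx.
by rewrite eq_sym (negbTE hx).
Qed.

Lemma prob_mono (T1 T2 : eqType) (Y : Omega -> T1) (V : Omega -> T2) w :
  (forall w', V w' = V w -> Y w' = Y w) -> prob P V (V w) <= prob P Y (Y w).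
Proof.
move=> h; rewrite /prob [X in X <= _]big_mkcond [X in _ <= X]big_mkcond /=.
apply: ler_sum => w' _; case: eqP => [/h ->|_]; first by rewrite eqxx.
by case: ifP => _ //; apply: P_ge0.
Qed.

Lemma entropy_le b (T1 T2 : eqType) (Y : Omega -> T1) (V : Omega -> T2) :
  1 < b -> (forall w, 0 < P w -> prob P V (V w) <= prob P Y (Y w)) ->
  entropy P b Y <= entropy P b V.
Proof.
move=> hb h; rewrite !entropyE lerN2; apply: ler_sum => w _.
have := P_ge0 w; rewrite le_eqVlt => /orP[/eqP<-|hp]; first by rewrite !mul0r.
apply: ler_wpM2l; first exact: P_ge0.
apply: ler_wpM2r; first by rewrite invr_ge0 ltW // ln_gt0.
apply: ln_ler; last exact: h.
exact: lt_le_trans hp (prob_self _ _).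
Qed.

Lemma entropy_const b (T : eqType) (V : Omega -> T) c :
  \sum_w P w = 1 -> (forall w, 0 < P w -> prob P V (V w) = c) ->
  entropy P b V = - (ln c / ln b).
Proof.
move=> hs h; rewrite entropyE; congr (- _).
transitivity (\sum_w P w * (ln c / ln b)); last by rewrite -mulr_suml hs mul1r.
apply: eq_bigr => w _.
have := P_ge0 w; rewrite le_eqVlt => /orP[/eqP<-|hp]; first by rewrite !mul0r.
by rewrite h.
Qed.

Lemma entropy_lb b (T : eqType) (V : Omega -> T) c :
  1 < b -> \sum_w P w = 1 -> 0 < c -> (forall w, 0 < P w -> prob P V (V w) <= c) ->
  - (ln c / ln b) <= entropy P b V.
Proof.
move=> hb hs hc h; rewrite entropyE.
have -> : ln c / ln b = \sum_w P w * (ln c / ln b) by rewrite -mulr_suml hs mul1r.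
rewrite lerN2; apply: ler_sum => w _.
have := P_ge0 w; rewrite le_eqVlt => /orP[/eqP<-|hp]; first by rewrite !mul0r.
apply: ler_wpM2l; first exact: P_ge0.
apply: ler_wpM2r; first by rewrite invr_ge0 ltW // ln_gt0.
apply: ln_ler; last exact: h.
exact: lt_le_trans hp (prob_self _ _).
Qed.
End Gen.

Lemma card_ffun_rV (F : finFieldType) (n L : nat) :
  #|{: {ffun 'I_n -> 'rV[F]_L}}| = (#|F| ^ (n * L))%N.
Proof. by rewrite card_ffun card_mx card_ord mul1n -expnM mulnC. Qed.

Lemma card_sumfib (F : finFieldType) (n L : nat) (s : 'rV[F]_L) : (0 < n)%N ->
  #|[pred f : {ffun 'I_n -> 'rV[F]_L} | \sum_i f i == s]| = (#|F| ^ (n.-1 * L))%N.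
Proof.
case: n => // n _.
pose e (d : 'rV[F]_L) := [ffun i : 'I_n.+1 => if i == ord0 then d else 0].
have sume d : \sum_i e d i = d.
  rewrite (bigD1 ord0) //= ffunE eqxx big1 ?addr0 // => i /negbTE hi.
  by rewrite ffunE hi.
have fib s0 : #|[pred f : {ffun 'I_n.+1 -> 'rV[F]_L} | \sum_i f i == s0]| =
              #|[pred f : {ffun 'I_n.+1 -> 'rV[F]_L} | \sum_i f i == 0]|.
  rewrite -!sum1_card (reindex_inj (addrI (e s0))) /=; apply: eq_bigl => f.
  rewrite !inE.
  rewrite (eq_bigr (fun i => e s0 i + f i)); last by move=> i _; rewrite ffunE.
  by rewrite big_split /= sume -subr_eq0 [s0 + _]addrC addrK.
pose rs (f : {ffun 'I_n.+1 -> 'rV[F]_L}) := \sum_i f i.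
have tot : (\sum_(s0 : 'rV[F]_L) #|[pred f : {ffun 'I_n.+1 -> 'rV[F]_L} | rs f == s0]|)%N
           = #|{: {ffun 'I_n.+1 -> 'rV[F]_L}}|.
  rewrite -sum1_card.
  rewrite (eq_bigr (fun s0 => \sum_(f : {ffun 'I_n.+1 -> 'rV[F]_L}) if rs f == s0 then 1 else 0)%N); last first.
    by move=> s0 _; rewrite -sum1_card big_mkcond.
  rewrite exchange_big /=; apply: eq_bigr => f _.
  rewrite -big_mkcond /= (eq_bigl (fun s0 => s0 == rs f)) ?big_pred1_eq // => s0.
move: tot; rewrite (eq_bigr (fun _ => #|[pred f : {ffun 'I_n.+1 -> 'rV[F]_L} | \sum_i f i == 0]|)); last by move=> s0 _; exact: fib.
rewrite sum_nat_const card_ffun_rV card_mx mul1n fib => h.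
have hF : (0 < #|F| ^ L)%N by rewrite expn_gt0; apply/orP; left; apply/card_gt0P; exists 0.
apply/eqP; rewrite -(eqn_pmul2l hF) h.
by rewrite -expnD mulSn.
Qed.

Lemma cardF_gt1 (F : finFieldType) : (1 < #|F|)%N.
Proof.
exact: card_finNzRing_gt1. Qed.

Lemma qF_gt1 (F : finFieldType) : 1 < (#|F|%:R : R).
Proof. by rewrite ltr1n cardF_gt1. Qed.

Lemma ln_qpow (F : finFieldType) n :
  ln ((#|F| ^ n)%:R) / ln (#|F|%:R) = n%:R :> R.
Proof.
have h1 := qF_gt1 F.
rewrite natrX lnX ?(lt_trans ltr01) // mulfK //.
by apply: lt0r_neq0; apply: ln_gt0.
Qed.

Lemma ln_qpowV (F : finFieldType) n :
  - (ln ((#|F| ^ n)%:R)^-1 / ln (#|F|%:R)) = n%:R :> R.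
Proof.
rewrite lnV ?mulNr ?opprK ?ln_qpow //.
by rewrite ltr0n expn_gt0 (ltn_trans _ (cardF_gt1 F)).
Qed.

Section Prob.
Variables (F : finFieldType) (K L : nat) (Qt : finType) (pQ : Qt -> R).
Hypothesis hpQ : is_distribution pQ.
Local Notation Om := (msgs F K L * Qt)%type.
Local Notation P := (@joint_prob F K L Qt pQ).
Local Notation c := ((#|F| ^ (K * L))%:R : R).

Lemma c_gt0 : 0 < c.
Proof. by rewrite ltr0n expn_gt0 (ltn_trans _ (cardF_gt1 F)). Qed.

Lemma P_ge0 o : 0 <= P o.
Proof. by rewrite /joint_prob divr_ge0 ?(ltW c_gt0) //; case: hpQ. Qed.

Lemma sum_pairE (G : Om -> R) : \sum_(o : Om) G o = \sum_w \sum_qq G (w, qq).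
Proof. by rewrite pair_bigA; apply: eq_bigr => -[]. Qed.

Lemma sumP : \sum_(o : Om) P o = 1.
Proof.
rewrite sum_pairE /joint_prob /=.
rewrite (eq_bigr (fun _ => c^-1)); last first.
  by move=> w _; rewrite -mulr_suml; case: hpQ => _ ->; rewrite mul1r.
rewrite sumr_const card_ffun_rV -[_ *+ _]mulr_natr mulVf //.
exact: lt0r_neq0 c_gt0.
Qed.

Lemma prob_fstE (T : eqType) (Y : msgs F K L -> T) y :
  prob P (fun o => Y o.1) y = #|[pred w | Y w == y]|%:R / c.
Proof.
rewrite /prob.
have -> : \sum_(o : Om | Y o.1 == y) P o = \sum_(w | Y w == y) \sum_qq P (w, qq).
  by rewrite pair_big_dep /=; apply: eq_big => -[] //= w qq; rewrite andbT.
rewrite (eq_bigr (fun _ => c^-1)); last first.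
  by move=> w _; rewrite /joint_prob /= -mulr_suml; case: hpQ => _ ->; rewrite mul1r.
by rewrite sumr_const mulr_natl.
Qed.

Lemma prob_W w : prob P (fun o => o.1) w = c^-1.
Proof.
rewrite (prob_fstE id) /=.
have -> : #|[pred w' : msgs F K L | w' == w]| = 1%N by rewrite card1.
by rewrite mul1r.
Qed.

Lemma prob_S s : (0 < K)%N -> prob P (fun o => msg_sum o.1) s = ((#|F| ^ L)%:R)^-1.
Proof.
move=> hK; rewrite (prob_fstE (@msg_sum F K L)).
have := card_sumfib s hK; rewrite /msg_sum => ->.
have -> : (K * L = L + K.-1 * L)%N by rewrite -mulSn prednK.
rewrite expnD natrM invfM mulrA mulrAC mulfV ?mul1r //.
by rewrite pnatr_eq0 -lt0n expn_gt0 (ltn_trans _ (cardF_gt1 F)).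
Qed.

Lemma prob_Q qq : prob P (fun o => o.2) qq = pQ qq.
Proof.
rewrite /prob.
have -> : \sum_(o : Om | o.2 == qq) P o = \sum_(w : msgs F K L) \sum_(qq' | qq' == qq) P (w, qq').
  by rewrite pair_big_dep /=.
rewrite (eq_bigr (fun _ => pQ qq / c)); last by move=> w _; rewrite big_pred1_eq.
rewrite sumr_const card_ffun_rV -[_ *+ _]mulr_natr mulfVK //.
exact: lt0r_neq0 c_gt0.
Qed.


Lemma H_id : entropy P (#|F|%:R) (fun o => o) =
  (K * L)%:R + entropy P (#|F|%:R) (fun o : Om => o.2).
Proof.
rewrite !entropyE; try exact: P_ge0.
have e : forall o : Om, P o * (ln (prob P (fun o => o) o) / ln (#|F|%:R)) =
   P o * (ln (prob P (fun o : Om => o.2) o.2) / ln (#|F|%:R)) - P o * (K * L)%:R.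
  move=> o; rewrite prob_Q.
  have -> : prob P (fun o => o) o = P o by rewrite /prob big_pred1_eq.
  have := P_ge0 o; rewrite le_eqVlt => /orP[/eqP<-|hp]; first by rewrite !mul0r subrr.
  have hq : 0 < pQ o.2.
    case: hpQ => hge _; have := hge o.2; rewrite le_eqVlt => /orP[/eqP e0|//].
    by move: hp; rewrite /joint_prob -e0 RdivE mul0r ltxx.
  rewrite /joint_prob lnM ?invr_gt0 ?c_gt0 // lnV ?c_gt0 // -(ln_qpow F (K * L)).
  by rewrite mulrDl mulNr mulrDr mulrN.
rewrite (eq_bigr _ (fun o _ => e o)) sumrB -mulr_suml sumP mul1r opprB.
by rewrite addrC.
Qed.

End Prob.

Lemma subset_card (T : finType) (C : {set T}) n :
  (n <= #|C|)%N -> exists A : {set T}, A \subset C /\ #|A| = n.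
Proof.
elim: n => [|n IH] h; first by exists set0; rewrite sub0set cards0.
have [A [hA hcA]] := IH (ltnW h).
have : (0 < #|C :\: A|)%N.
  by rewrite cardsD (setIidPr hA) hcA subn_gt0.
case/card_gt0P => x; rewrite inE => /andP[hxA hxC].
exists (x |: A); split; first by rewrite subUset sub1set hxC hA.
by rewrite cardsU1 hxA hcA.
Qed.

Lemma sum_eq_pointwise (I : finType) (f h : I -> nat) :
  (forall i, h i <= f i)%N -> (\sum_i f i <= \sum_i h i)%N -> forall i, f i = h i.
Proof.
move=> hle hs i; apply/eqP; rewrite eqn_leq hle andbT.
move: hs; rewrite (bigD1 i) //= [X in (_ <= X)%N](bigD1 i) //= => H.
have H2 : (\sum_(j | j != i) h j <= \sum_(j | j != i) f j)%N by apply: leq_sum => j _.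
lia.
Qed.

Lemma lin_aux (a e2 e3 e4 e5 e6 KL m l : R) :
  a + e2 - e3 - e4 = 0 -> KL <= a -> m * l <= e2 -> e4 = l -> e3 <= e5 ->
  e5 = KL + e6 -> (m - 1) * l <= e6.
Proof. move=> *; lra. Qed.

Section Conv.
Variables (F : finFieldType) (K N Nr M L : nat) (Qt : finType) (pQ : Qt -> R)
  (Z : 'I_N -> {set 'I_K}) (T : 'I_N -> nat)
  (psi : forall n : 'I_N, msgs F K L -> Qt -> 'rV[F]_(T n)).
Hypotheses (hK : (0 < K)%N) (hN : (0 < N)%N) (hNr : (0 < Nr)%N) (hNrN : (Nr <= N)%N)
  (hL : (0 < L)%N) (hdiv : (N %| K)%N) (hM : M = (K %/ N * (N - Nr + 1))%N)
  (hMpos : (0 < M)%N).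
Hypothesis hdist : is_distribution pQ.
Hypothesis hZ : forall n, (#|Z n| <= M)%N.
Hypothesis hloc : forall n (w w' : msgs F K L) q,
  (forall k, k \in Z n -> w k = w' k) -> psi n w q = psi n w' q.
Hypothesis hdec : forall A : {set 'I_N}, #|A| = Nr ->
  exists dec : {dffun forall n : 'I_N, 'rV[F]_(T n)} -> 'rV[F]_L,
    (forall x y : {dffun forall n : 'I_N, 'rV[F]_(T n)},
        (forall n, n \in A -> x n = y n) -> dec x = dec y) /\
    (forall (w : msgs F K L) q, 0 < pQ q ->
        dec (transmissions psi (w, q)) = msg_sum w).

Local Notation g := (N - Nr + 1)%N.
Definition holders k := [set n | k \in Z n].

Lemma exists_pos : exists q0, 0 < pQ q0.
Proof.
case: (pickP (fun q => 0 < pQ q)) => [q hq|h]; first by exists q.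
case: hdist => hge hs; move: hs.
rewrite big1 => [/eqP|q _]; first by rewrite eq_sym oner_eq0.
by apply/eqP; rewrite eq_le hge andbT leNgt h.
Qed.

Lemma msg_sum_split (w : msgs F K L) k : msg_sum w = w k + \sum_(k' | k' != k) w k'.
Proof. by rewrite /msg_sum (bigD1 k). Qed.

Lemma holders_ge k : (g <= #|holders k|)%N.
Proof.
rewrite leqNgt; apply/negP => hlt.
have hC : (Nr <= #|~: holders k|)%N.
  have := cardsC (holders k); rewrite card_ord; lia.
have [A [hA hcA]] := subset_card hC.
have [dec [hd1 hd2]] := hdec hcA.
have [q0 hq0] := exists_pos.
pose w1 : msgs F K L := [ffun k' => if k' == k then const_mx 1 else 0].
have := hd1 (transmissions psi (0, q0)) (transmissions psi (w1, q0)).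
rewrite !hd2 //.
have e : msg_sum (0 : msgs F K L) = 0.
  by rewrite /msg_sum big1 // => i _; rewrite ffunE.
have e1 : msg_sum w1 = const_mx 1.
  rewrite (msg_sum_split _ k) ffunE eqxx big1 ?addr0 // => i /negbTE hi.
  by rewrite ffunE hi.
rewrite e e1 => H.
have : (0 : 'rV[F]_L) 0 (Ordinal hL) = (const_mx 1 : 'rV[F]_L) 0 (Ordinal hL).
  rewrite H //.
  move=> n hn; rewrite !ffunE /=; apply: hloc => k' hk'.
  rewrite !ffunE; case: (k' =P k) => // ek; subst k'.
  by move/subsetP: hA => /(_ n hn); rewrite inE inE hk'.
by rewrite !mxE => /eqP; rewrite eq_sym oner_eq0.
Qed.

Lemma NM_eq : (N * M = K * g)%N.
Proof. by rewrite hM mulnA [(N * _)%N]mulnC divnK. Qed.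

Lemma double_count : (\sum_k #|holders k| = \sum_n #|Z n|)%N.
Proof.
rewrite (eq_bigr (fun k => \sum_n (k \in Z n : nat))%N); last first.
  by move=> k _; rewrite -sum1_card big_mkcond /=; apply: eq_bigr => n _; rewrite inE; case: (_ \in _).
rewrite exchange_big /=; apply: eq_bigr => n _.
rewrite -sum1_card [in RHS]big_mkcond /=; apply: eq_bigr => k _; by case: (_ \in _).
Qed.

Lemma holders_eq k : #|holders k| = g.
Proof.
apply: (@sum_eq_pointwise _ (fun k => #|holders k|) (fun _ => g)) => //.
  exact: holders_ge.
rewrite double_count sum_nat_const card_ord -NM_eq.
have := @leq_sum _ (index_enum 'I_N) xpredT (fun n => #|Z n|) (fun _ => M) (fun n _ => hZ n); by rewrite sum_nat_const card_ord.
Qed.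

Lemma Z_card n : #|Z n| = M.
Proof.
apply/esym; apply: (@sum_eq_pointwise _ (fun _ => M) (fun n => #|Z n|)) => //.
rewrite -double_count sum_nat_const card_ord NM_eq.
rewrite (eq_bigr (fun _ => g)); last by move=> k _; exact: holders_eq.
by rewrite sum_nat_const card_ord.
Qed.

Lemma inj1 n k q (w w' : msgs F K L) : k \in Z n -> 0 < pQ q ->
  (forall k', k' != k -> w k' = w' k') -> psi n w q = psi n w' q -> w k = w' k.
Proof.
move=> hk hq hw hpsi.
pose A := ~: (holders k :\ n).
have hnH : n \in holders k by rewrite inE.
have hcA : #|A| = Nr.
  have := cardsC (holders k :\ n); have := cardsD1 n (holders k).
  rewrite hnH holders_eq card_ord /= /A; lia.
have [dec [hd1 hd2]] := hdec hcA.
have := hd1 (transmissions psi (w, q)) (transmissions psi (w', q)).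
rewrite !hd2 // (msg_sum_split w k) (msg_sum_split w' k).
have -> : \sum_(k' | k' != k) w k' = \sum_(k' | k' != k) w' k'.
  by apply: eq_bigr => k' hk'; exact: hw.
move=> H; apply: (addIr (\sum_(k' | k' != k) w' k')); apply: H.
move=> n' hn'; rewrite !ffunE /=.
have [->//|ne] := eqVneq n' n.
apply: hloc => k' hk'; apply: hw; apply/eqP => ek; subst k'.
by move: hn'; rewrite !inE ne hk'.
Qed.

Lemma T_ge n : (L <= T n)%N.
Proof.
have : (0 < #|Z n|)%N by rewrite Z_card.
case/card_gt0P => k hk.
have [q0 hq0] := exists_pos.
pose upd (v : 'rV[F]_L) : msgs F K L := [ffun k' => if k' == k then v else 0].
have finj : injective (fun v => psi n (upd v) q0).
  move=> v v' /= H.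
  have := inj1 hk hq0 _ H; rewrite !ffunE eqxx; apply.
  by move=> k' /negbTE hk'; rewrite !ffunE hk'.
have := leq_card _ finj; rewrite !card_mx !mul1n.
by rewrite leq_exp2l //; apply: cardF_gt1.
Qed.


Hypothesis hgN : (N - Nr + 1 %| N)%N.

Fixpoint good (s : seq ('I_N * 'I_K)) : Prop :=
  if s is p :: s' then
    [/\ p.2 \in Z p.1, (forall p', p' \in s' -> p'.2 \notin Z p.1) & good s']
  else True.

Lemma good_uniq s : good s -> uniq ([seq p.2 | p <- s]).
Proof.
elim: s => //= [[n k] s IH] [hk hs /IH ->]; rewrite andbT /=.
by apply/mapP => -[p hp /= ek]; move: (hs p hp); rewrite -ek hk.
Qed.

Lemma cover_card (s : seq ('I_N * 'I_K)) : (#|[set n | has (fun p => p.2 \in Z n) s]| <= size s * g)%N.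
Proof.
elim: s => [|p s IH] /=.
  have -> : [set n | false] = set0 :> {set 'I_N} by apply/setP => n; rewrite !inE.
  by rewrite cards0.
have -> : [set n | (p.2 \in Z n) || has (fun p => p.2 \in Z n) s] =
          holders p.2 :|: [set n | has (fun p => p.2 \in Z n) s].
  by apply/setP => n; rewrite !inE.
have := (leq_card_setU (holders p.2) [set n | has (fun p => p.2 \in Z n) s]).1.
rewrite holders_eq mulSn => h; apply: leq_trans h _; by rewrite leq_add2l.
Qed.

Lemma greedy i : (i <= N %/ g)%N -> exists s, size s = i /\ good s.
Proof.
elim: i => [_|i IH hi]; first by exists [::].
have [s [hs gs]] := IH (ltnW hi).
set U := [set n | has (fun p => p.2 \in Z n) s].
have hU : (#|U| < N)%N.
  have := leq_mul hi (leqnn g); rewrite divnK // mulSn.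
  have := cover_card s; rewrite hs -/U.
  have : (0 < g)%N by rewrite addn1.
  lia.
have : (0 < #|~: U|)%N by have := cardsC U; rewrite card_ord; lia.
case/card_gt0P => n; rewrite inE => hn.
have : (0 < #|Z n|)%N by rewrite Z_card.
case/card_gt0P => k hk.
exists ((n, k) :: s); split; first by rewrite /= hs.
split => // p hp; apply/negP => hpk; move: hn; rewrite inE => /hasP; apply.
by exists p.
Qed.

Lemma good_inj s q (w w' : msgs F K L) : good s -> 0 < pQ q ->
  (forall n, psi n w q = psi n w' q) ->
  (forall k, k \notin [seq p.2 | p <- s] -> w k = w' k) -> w = w'.
Proof.
elim: s => [|[n k] s IH] /=.
  by move=> _ _ _ h; apply/ffunP => k; exact: h.
move=> [hk hs gs] hq hpsi hag; apply: IH => // k'.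
have ek : w k = w' k.
  pose w'' : msgs F K L := [ffun k' => if k' == k then w' k else w k'].
  have e1 : psi n w q = psi n w'' q.
    rewrite hpsi; apply: hloc => k'' hk''; rewrite ffunE; case: (k'' =P k) => [->//|/eqP ne].
    apply/esym/hag; rewrite in_cons negb_or ne /=.
    by apply/mapP => -[p hp ep]; move: (hs p hp); rewrite -ep hk''.
  have := inj1 hk hq _ e1; rewrite ffunE eqxx; apply => k'' ne.
  by rewrite ffunE (negbTE ne).
move=> hk'; have [->//|ne] := eqVneq k' k; apply: hag.
by rewrite in_cons negb_or ne hk'.
Qed.

Lemma fiber_card q (x : {dffun forall n : 'I_N, 'rV[F]_(T n)}) : 0 < pQ q ->
  (#|[pred w : msgs F K L | transmissions psi (w, q) == x]| <= #|F| ^ ((K - N %/ g) * L))%N.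
Proof.
move=> hq.
have [s [hs gs]] := greedy (leqnn (N %/ g)).
set Ks := [set k in [seq p.2 | p <- s]].
have hKs : #|Ks| = (N %/ g)%N.
  by rewrite cardsE -hs -(size_map (fun p : 'I_N * 'I_K => p.2)); apply/card_uniqP/good_uniq.
pose phi (w : msgs F K L) : {ffun {k : 'I_K | k \notin Ks} -> 'rV[F]_L} :=
  [ffun k => w (val k)].
have hinj : {in [pred w : msgs F K L | transmissions psi (w, q) == x] &, injective phi}.
  move=> w w'; rewrite !inE => /eqP hw /eqP hw' hphi.
  apply: (good_inj gs hq).
    move=> n; have := congr1 (fun f : {dffun forall n : 'I_N, 'rV[F]_(T n)} => f n) (etrans hw (esym hw')).
    by rewrite !ffunE.
  move=> k hk; have hk' : k \notin Ks by rewrite inE.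
  by have := congr1 (fun f : {ffun {k : 'I_K | k \notin Ks} -> 'rV[F]_L} => f (exist _ k hk')) hphi; rewrite !ffunE.
have := @leq_card_in _ _ phi _ hinj; rewrite card_ffun card_mx mul1n card_sig.
have -> : #|[pred k : 'I_K | k \notin Ks]| = (K - N %/ g)%N.
  have e : #|[pred k : 'I_K | k \notin Ks]| = #|~: Ks| by apply: eq_card => k; rewrite !inE.
  by rewrite e; have := cardsC Ks; rewrite hKs card_ord; lia.
by rewrite -expnM mulnC.
Qed.


Lemma probX_le x : prob (joint_prob pQ) (transmissions psi) x <=
  ((#|F| ^ (N %/ g * L))%:R)^-1.
Proof.
set m := (N %/ g)%N.
set B := (#|F| ^ ((K - m) * L))%N.
have hmK : (m <= K)%N.
  by apply: leq_trans (leq_div N g) (dvdn_leq hK hdiv).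
have hc := c_gt0 F K L.
rewrite /prob big_mkcond /= sum_pairE exchange_big /=.
apply: le_trans (_ : \sum_q B%:R * (pQ q / (#|F| ^ (K * L))%:R) <= _).
  apply: ler_sum => q _.
  rewrite -big_mkcond /= /joint_prob /= sumr_const RdivE mulr_natl.
  case: hdist => hge _; have := hge q; rewrite le_eqVlt => /orP[/eqP<-|hq].
    by rewrite !mul0r !mul0rn.
  apply: ler_wpMn2l; first by rewrite divr_ge0 // ltW.
  exact: fiber_card.
rewrite -mulr_sumr -mulr_suml; case: hdist => _ ->; rewrite mul1r.
have -> : (K * L = (K - m) * L + m * L)%N by rewrite -mulnDl subnK.
by rewrite expnD natrM invfM mulrA mulfV ?mul1r // pnatr_eq0 -lt0n expn_gt0 (ltn_trans _ (cardF_gt1 F)).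
Qed.


Lemma rand_lb :
  cond_mutual_info (joint_prob pQ) (#|F|%:R)
     (fun o : msgs F K L * Qt => o.1) (transmissions psi) (fun o => msg_sum o.1) = 0 ->
  ((N %/ g)%:R - 1) * L%:R <=
    entropy (joint_prob pQ) (#|F|%:R) (fun o : msgs F K L * Qt => o.2).
Proof.
rewrite /cond_mutual_info => H0.
have hb := qF_gt1 F.
have P0 := @P_ge0 F K L _ _ hdist.
have sP := sumP F K L hdist.
have hc := c_gt0 F K L.
have h1 : (K * L)%:R <= entropy (joint_prob pQ) (#|F|%:R)
            (fun o : msgs F K L * Qt => (o.1, msg_sum o.1)).
  rewrite -(ln_qpowV F (K * L)); apply: entropy_lb => //; first by rewrite invr_gt0.
  move=> o _; apply: le_trans (@prob_mono _ _ P0 _ _ (fun o : msgs F K L * Qt => o.1) (fun o => (o.1, msg_sum o.1)) o _) _.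
    by move=> o' [].
  by rewrite prob_W.
have h2 : (N %/ g * L)%:R <= entropy (joint_prob pQ) (#|F|%:R)
            (fun o : msgs F K L * Qt => (transmissions psi o, msg_sum o.1)).
  rewrite -(ln_qpowV F (N %/ g * L)); apply: entropy_lb => //.
    by rewrite invr_gt0 ltr0n expn_gt0 (ltn_trans _ (cardF_gt1 F)).
  move=> o _; apply: le_trans (@prob_mono _ _ P0 _ _ (transmissions psi) (fun o => (transmissions psi o, msg_sum o.1)) o _) _.
    by move=> o' [].
  exact: probX_le.
have h3 : entropy (joint_prob pQ) (#|F|%:R) (fun o : msgs F K L * Qt => msg_sum o.1) = L%:R.
  rewrite -(ln_qpowV F L); apply: entropy_const => // o _.
  exact: prob_S.
have h4 : entropy (joint_prob pQ) (#|F|%:R)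
            (fun o : msgs F K L * Qt => (o.1, transmissions psi o, msg_sum o.1)) <=
          entropy (joint_prob pQ) (#|F|%:R) (fun o : msgs F K L * Qt => o).
  by apply: (entropy_le P0) => // o _; apply: (prob_mono P0) => o' ->.
have h5 := H_id F K L hdist.
move: H0 h1 h2 h3 h4 h5.
rewrite !RminusE RplusE !natrM.
exact: lin_aux.
Qed.


End Conv.

Lemma converse (F : finFieldType) (K N Nr M L : nat) (Qt : finType) (pQ : Qt -> R)
  (Z : 'I_N -> {set 'I_K}) (T : 'I_N -> nat)
  (psi : forall n : 'I_N, msgs F K L -> Qt -> 'rV[F]_(T n)) :
  (0 < K)%N -> (0 < N)%N -> (0 < Nr)%N -> (Nr <= N)%N -> (0 < L)%N ->
  (N %| K)%N -> M = (K %/ N * (N - Nr + 1))%N -> (0 < M)%N ->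
  ((N - Nr + 1) %| N)%N ->
  @secure_scheme F K N Nr M L Qt pQ Z T psi ->
  Nr%:R <= @comm_cost N Nr L T /\
  N%:R / (N - Nr + 1)%:R - 1 <= rand_size F K L pQ.
Proof.
move=> hK hN hNr hNrN hL hdiv hM hMpos hgN [hdist hZ hloc hdec hsec].
split.
  rewrite /comm_cost RdivE.
  have hNr' : (Nr <= #|[set: 'I_N]|)%N by rewrite cardsT card_ord.
  have [A0 [_ hA0]] := subset_card hNr'.
  have hmax : (Nr * L <= \max_(A : {set 'I_N} | #|A| == Nr) \sum_(n in A) T n)%N.
    apply: leq_trans _ (@leq_bigmax_cond _ (fun A : {set 'I_N} => #|A| == Nr) (fun A : {set 'I_N} => \sum_(n in A) T n)%N A0 (introT eqP hA0)).
    rewrite -hA0 -sum_nat_const; apply: leq_sum => n _.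
    exact: (T_ge hK hN hNr hNrN hL hdiv hM hMpos hdist hZ hloc hdec).
  by rewrite ler_pdivlMr ?ltr0n // -natrM ler_nat.
have := rand_lb hK hN hNr hNrN hL hdiv hM hMpos hdist hZ hloc hdec hgN hsec.
rewrite /rand_size RdivE ler_pdivlMr ?ltr0n //.
have hg : (0 < N - Nr + 1)%N by rewrite addn1.
have -> : N%:R / (N - Nr + 1)%:R = (N %/ (N - Nr + 1))%:R :> R.
  set g := (N - Nr + 1)%N; by rewrite -[in LHS](divnK hgN) natrM mulfK // pnatr_eq0 -lt0n.
by [].
Qed.

Lemma comm_cost_const N Nr L : (Nr <= N)%N -> (0 < L)%N ->
  @comm_cost N Nr L (fun _ => L) = Nr%:R.
Proof.
move=> hNrN hL; rewrite /comm_cost RdivE.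
have hNr' : (Nr <= #|[set: 'I_N]|)%N by rewrite cardsT card_ord.
have [A0 [_ hA0]] := subset_card hNr'.
have -> : (\max_(A : {set 'I_N} | #|A| == Nr) \sum_(n in A) L = Nr * L)%N.
  apply/eqP; rewrite eqn_leq; apply/andP; split.
    by apply/bigmax_leqP => A /eqP hA; rewrite sum_nat_const hA.
  apply: leq_trans _ (@leq_bigmax_cond _ (fun A : {set 'I_N} => #|A| == Nr) (fun A : {set 'I_N} => \sum_(n in A) L)%N A0 (introT eqP hA0)).
  by rewrite sum_nat_const hA0.
by rewrite natrM mulfK // pnatr_eq0 -lt0n.
Qed.

Section Ach.
Variables (F : finFieldType) (K N Nr M L : nat).
Hypotheses (hK : (0 < K)%N) (hN : (0 < N)%N) (hNr : (0 < Nr)%N) (hNrN : (Nr <= N)%N)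
  (hL : (0 < L)%N) (hdiv : (N %| K)%N) (hM : M = (K %/ N * (N - Nr + 1))%N)
  (hMpos : (0 < M)%N) (hgN : ((N - Nr + 1) %| N)%N).

Local Notation g := (N - Nr + 1)%N.
Local Notation m := (N %/ (N - Nr + 1))%N.

Lemma g_gt0 : (0 < g)%N. Proof. by rewrite addn1. Qed.
Lemma Nmg : (m * g = N)%N. Proof. exact: divnK. Qed.
Lemma m_gt0 : (0 < m)%N.
Proof. by rewrite divn_gt0 ?g_gt0 // dvdn_leq. Qed.
Lemma KmM : (m * M = K)%N.
Proof. by rewrite hM mulnCA Nmg divnK. Qed.

Lemma gs_lt (n : 'I_N) : (n %/ g < m)%N.
Proof. by rewrite ltn_divLR ?g_gt0 // Nmg. Qed.
Definition gs (n : 'I_N) : 'I_m := Ordinal (gs_lt n).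
Lemma gd_lt (k : 'I_K) : (k %/ M < m)%N.
Proof. by rewrite ltn_divLR // KmM. Qed.
Definition gd (k : 'I_K) : 'I_m := Ordinal (gd_lt k).
Lemma srv_lt (j : 'I_m) : (j * g < N)%N.
Proof. by apply: (leq_trans _ (eq_leq Nmg)); rewrite ltn_pmul2r ?g_gt0. Qed.
Definition srv (j : 'I_m) : 'I_N := Ordinal (srv_lt j).
Lemma gs_srv j : gs (srv j) = j.
Proof. by apply: val_inj => /=; rewrite mulnK // g_gt0. Qed.

Definition Qts := {ffun 'I_m -> 'rV[F]_L}.
Definition cq : R := ((#|F| ^ (m.-1 * L))%:R)^-1.
Definition pQs (qq : Qts) : R := if \sum_j qq j == 0 then cq else 0.
Definition Zs (n : 'I_N) : {set 'I_K} := [set k | gd k == gs n].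
Definition Ts : 'I_N -> nat := fun _ => L.
Definition Ssum (w : msgs F K L) (j : 'I_m) : 'rV[F]_L := \sum_(k | gd k == j) w k.
Definition psis (n : 'I_N) (w : msgs F K L) (qq : Qts) : 'rV[F]_(Ts n) :=
  Ssum w (gs n) + qq (gs n).

Lemma cq_gt0 : 0 < cq.
Proof. by rewrite invr_gt0 ltr0n expn_gt0 (ltn_trans _ (cardF_gt1 F)). Qed.

Lemma pQs_dist : is_distribution pQs.
Proof.
split.
  by move=> qq; rewrite /pQs; case: ifP => _ //; apply: ltW; apply: cq_gt0.
rewrite /pQs -big_mkcond /= sumr_const.
have := card_sumfib (0 : 'rV[F]_L) m_gt0 => ->.
by rewrite /cq -[_ *+ _]mulr_natr mulVf // pnatr_eq0 -lt0n expn_gt0 (ltn_trans _ (cardF_gt1 F)).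
Qed.


Lemma Zs_card n : (#|Zs n| <= M)%N.
Proof.
pose f (k : 'I_K) : 'I_M := Ordinal (ltn_pmod k hMpos).
have hinj : {in Zs n &, injective f}.
  move=> k1 k2; rewrite !inE => /eqP h1 /eqP h2 /(congr1 val) /= hm.
  have hd : (k1 %/ M = k2 %/ M)%N.
    by have := congr1 val (etrans h1 (esym h2)).
  by apply: val_inj => /=; rewrite (divn_eq k1 M) (divn_eq k2 M) hm hd.
by have := @leq_card_in _ _ f _ hinj; rewrite card_ord.
Qed.

Lemma psis_loc n (w w' : msgs F K L) qq :
  (forall k, k \in Zs n -> w k = w' k) -> psis n w qq = psis n w' qq.
Proof.
move=> h; rewrite /psis /Ssum; congr (_ + _); apply: eq_bigr => k hk.
by apply: h; rewrite inE.
Qed.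

Lemma rep_ex (A : {set 'I_N}) j : #|A| = Nr -> exists n, (n \in A) && (gs n == j).
Proof.
move=> hA.
case: (pickP (fun n => (n \in A) && (gs n == j))) => [n hn|h]; first by exists n.
exfalso.
have hlt (i : 'I_g) : (j * g + i < N)%N.
  apply: (leq_trans _ (eq_leq Nmg)).
  have := ltn_ord j; have := ltn_ord i.
  move: (nat_of_ord i) (nat_of_ord j) => a b ha hb.
  apply: (@leq_trans (b.+1 * g)); last by rewrite leq_mul2r hb orbT.
  by rewrite mulSn; move: (b * g)%N => c; lia.
pose f (i : 'I_g) : 'I_N := Ordinal (hlt i).
have finj : injective f.
  by move=> i1 i2 /(congr1 val) /= /addnI e; apply: val_inj.
have hsub : [set f i | i : 'I_g] \subset ~: A.
  apply/subsetP => x /imsetP [i _ ->]; rewrite inE.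
  have := h (f i); rewrite /= => /negbT; rewrite negb_and => /orP[//|].
  suff -> : gs (f i) = j by rewrite eqxx.
  by apply: val_inj => /=; rewrite divnMDl ?g_gt0 // (divn_small (ltn_ord i)) addn0.
have := subset_leq_card hsub; rewrite card_imset // card_ord.
  have := cardsC A; rewrite hA card_ord; move: #|~: A| => x h1 h2; lia.
Qed.

Definition decs (A : {set 'I_N}) (x : {dffun forall n : 'I_N, 'rV[F]_(Ts n)}) : 'rV[F]_L :=
  \sum_(j : 'I_m) (if [pick n | (n \in A) && (gs n == j)] is Some n then (x n : 'rV[F]_L) else (0 : 'rV[F]_L)).

Lemma sum_Ssum (w : msgs F K L) : \sum_j Ssum w j = msg_sum w.
Proof.
rewrite /msg_sum (partition_big gd xpredT) //=.
Qed.

Lemma decs_ok (A : {set 'I_N}) : #|A| = Nr ->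
  (forall x y : {dffun forall n : 'I_N, 'rV[F]_(Ts n)},
      (forall n, n \in A -> x n = y n) -> decs A x = decs A y) /\
  (forall (w : msgs F K L) qq, 0 < pQs qq ->
      decs A (transmissions psis (w, qq)) = msg_sum w).
Proof.
move=> hA; split.
  move=> x y hxy; apply: eq_bigr => j _.
  by case: pickP => // n /andP[hn _]; apply: hxy.
move=> w qq hq.
have hs : \sum_j qq j = 0.
  by move: hq; rewrite /pQs; case: eqP => // _; rewrite ltxx.
transitivity (\sum_j (Ssum w j + qq j)); last by rewrite big_split /= hs addr0 sum_Ssum.
apply: eq_bigr => j _.
case: pickP => [n /andP[_ /eqP <-]|h]; first by rewrite ffunE.
by have [n hn] := rep_ex j hA; move: (h n); rewrite hn.
Qed.


Local Notation P := (@joint_prob F K L Qts pQs).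
Local Notation c := ((#|F| ^ (K * L))%:R : R).

Lemma P0 : forall o, 0 <= P o.
Proof. exact: (@P_ge0 F K L _ _ pQs_dist). Qed.
Lemma sP : \sum_o P o = 1.
Proof. exact: (sumP F K L pQs_dist). Qed.

Lemma pos_sum0 o : 0 < P o -> \sum_j o.2 j = 0.
Proof.
case: o => [w qq]; rewrite /joint_prob /pQs /= RdivE.
by case: eqP => // _; rewrite mul0r ltxx.
Qed.

Lemma H_WS : entropy P (#|F|%:R) (fun o => (o.1, msg_sum o.1)) = (K * L)%:R.
Proof.
rewrite -(ln_qpowV F (K * L)); apply: (entropy_const P0); first exact: sP.
move=> o _; apply/le_anti/andP; split.
  by rewrite -(prob_W pQs_dist o.1); apply: (prob_mono P0) => o' [].
by rewrite -(prob_W pQs_dist o.1); apply: (prob_mono P0) => o' ->.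
Qed.

Lemma H_S : entropy P (#|F|%:R) (fun o => msg_sum o.1) = L%:R.
Proof.
rewrite -(ln_qpowV F L); apply: (entropy_const P0); first exact: sP.
by move=> o _; exact: (prob_S pQs_dist _ hK).
Qed.

Definition qstar (w w' : msgs F K L) (qq : Qts) : Qts :=
  [ffun j => qq j + Ssum w j - Ssum w' j].

Lemma X_eq (w w' : msgs F K L) (qq qq' : Qts) :
  (transmissions psis (w', qq') == transmissions psis (w, qq)) = (qq' == qstar w w' qq).
Proof.
apply/eqP/eqP => [h|->].
  apply/ffunP => j; rewrite ffunE.
  have := congr1 (fun f : {dffun forall n : 'I_N, 'rV[F]_(Ts n)} => f (srv j)) h.
  rewrite !ffunE /psis gs_srv => e.
  apply: (addrI (Ssum w' j)); rewrite e.
  by rewrite [Ssum w' j + _]addrC subrK addrC.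
apply/ffunP => n; rewrite !ffunE /psis ffunE.
by rewrite [Ssum w' _ + _]addrC subrK addrC.
Qed.


Lemma sum_qstar w w' qq : \sum_j qstar w w' qq j = \sum_j qq j + msg_sum w - msg_sum w'.
Proof.
rewrite /qstar (eq_bigr (fun j => qq j + Ssum w j - Ssum w' j)); last by move=> j _; rewrite ffunE.
by rewrite sumrB big_split /= !sum_Ssum.
Qed.

Lemma H_XS : entropy P (#|F|%:R) (fun o => (transmissions psis o, msg_sum o.1)) = (m * L)%:R.
Proof.
rewrite -(ln_qpowV F (m * L)); apply: (entropy_const P0); first exact: sP.
move=> [w qq] hpo; have hs := pos_sum0 hpo; rewrite /= in hs.
rewrite /prob big_mkcond sum_pairE /=.
transitivity (\sum_(w' : msgs F K L) (if msg_sum w' == msg_sum w then cq / c else 0)).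
  apply: eq_bigr => w' _.
  rewrite (eq_bigr (fun qq' => if (qq' == qstar w w' qq) && (msg_sum w' == msg_sum w)
                               then pQs qq' / c else 0)); last first.
    by move=> qq' _; rewrite xpair_eqE X_eq /joint_prob /= RdivE.
  case: eqP => hS; last by rewrite big1 // => qq' _; rewrite andbF.
  rewrite (eq_bigr (fun qq' => if qq' == qstar w w' qq then pQs qq' / c else 0)); last first.
    by move=> qq' _; rewrite andbT.
  rewrite -big_mkcond big_pred1_eq /pQs sum_qstar hs hS add0r subrr eqxx.
  by [].
rewrite -big_mkcond /= sumr_const.
have := card_sumfib (msg_sum w) hK; rewrite /msg_sum => ->.
have e1 : (K * L = L + K.-1 * L)%N by rewrite -mulSn prednK.
have e2 : (m * L = L + m.-1 * L)%N by rewrite -mulSn prednK // m_gt0.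
rewrite -(mulr_natr (cq / c)) /cq e1 e2 !natrX !exprD.
have ha : (#|F|%:R : R) != 0 by rewrite pnatr_eq0 -lt0n (ltn_trans _ (cardF_gt1 F)).
field.
by rewrite !expf_neq0.
Qed.


Lemma H_Q : entropy P (#|F|%:R) (fun o : msgs F K L * Qts => o.2) = (m.-1 * L)%:R.
Proof.
rewrite -(ln_qpowV F (m.-1 * L)); apply: (entropy_const P0); first exact: sP.
move=> o hpo; rewrite (prob_Q F K L pQs) /pQs pos_sum0 // eqxx.
by [].
Qed.

Lemma H_WXS : entropy P (#|F|%:R) (fun o => (o.1, transmissions psis o, msg_sum o.1)) =
  (K * L)%:R + (m.-1 * L)%:R.
Proof.
have hb := qF_gt1 F.
have e : entropy P (#|F|%:R) (fun o => (o.1, transmissions psis o, msg_sum o.1)) =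
         entropy P (#|F|%:R) (fun o : msgs F K L * Qts => o).
  apply/le_anti/andP; split.
    by apply: (entropy_le P0) => // o _; apply: (prob_mono P0) => o' ->.
  apply: (entropy_le P0) => // o _; apply: (prob_mono P0) => -[w' qq'].
  case: o => w qq /= [ew hX _]; subst w'.
  move/eqP: hX; rewrite X_eq => /eqP ->.
  by congr pair; apply/ffunP => j; rewrite ffunE addrK.
by rewrite e (H_id F K L pQs_dist) H_Q.
Qed.

Lemma ach_cmi_aux (KL ml l x : R) : x = ml + 1 -> KL + x * l - (KL + ml * l) - l = 0.
Proof. by move=> ->; ring. Qed.

Lemma ach_secure : @secure_scheme F K N Nr M L Qts pQs Zs Ts psis.
Proof.
split.
- exact: pQs_dist.
- exact: Zs_card.
- exact: psis_loc.
- by move=> A hA; exists (decs A); apply: decs_ok.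
rewrite /cond_mutual_info H_WS H_XS H_WXS H_S !RminusE RplusE !natrM.
apply: ach_cmi_aux.
by rewrite natr1 prednK // m_gt0.
Qed.

Lemma ach_rand : rand_size F K L pQs = N%:R / (N - Nr + 1)%:R - 1.
Proof.
rewrite /rand_size RdivE.
rewrite H_Q natrM mulfK ?pnatr_eq0 -?lt0n //.
have -> : N%:R / (N - Nr + 1)%:R = m%:R :> R.
  set G := (N - Nr + 1)%N; by rewrite -[in LHS]Nmg natrM mulfK // pnatr_eq0 -lt0n g_gt0.
by rewrite -{2}(prednK m_gt0) -natr1 addrK.
Qed.

End Ach.

Theorem theorem4 (K N Nr M : nat) :
  (0 < K)%N -> (0 < N)%N -> (0 < Nr)%N -> (0 < M)%N -> (Nr <= N)%N ->
  (N %| K)%N ->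
  M = (K %/ N * (N - Nr + 1))%N ->
  ((N - Nr + 1) %| N)%N ->
  exists q0 : nat, forall F : finFieldType, (q0 <= #|F|)%N ->
  forall L : nat, (0 < L)%N ->
  exists Rstar : R,
    is_min (comm_achievable F K N Nr M L) Rstar /\
    is_min (rand_achievable F K N Nr M L Rstar)
           ((N%:R / (N - Nr + 1)%:R) - 1).
Proof.
move=> hK hN hNr hMpos hNrN hdiv hM hgN.
exists 0%N => F _ L hL.
have hs := ach_secure F hK hN hNr hNrN hL hdiv hM hMpos hgN.
exists Nr%:R; split; split.
- do 5 eexists; split; first exact: hs.
  exact: comm_cost_const.
- move=> x [Qt [pQ [Z [T [psi [hs' <-]]]]]].
  exact: (converse hK hN hNr hNrN hL hdiv hM hMpos hgN hs').1.
- do 5 eexists; split; first exact: hs.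
    exact: comm_cost_const.
  exact: (ach_rand F K hN hL hgN).
- move=> x [Qt [pQ [Z [T [psi [hs' _ <-]]]]]].
  exact: (converse hK hN hNr hNrN hL hdiv hM hMpos hgN hs').2.
Qed.
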